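(* Let $m\ge 1$, and let $a_1,\dots,a_m\in[-1,1]$ with $\sum_{i=1}^m a_i=0$; set $p_i=(1+a_i)/m$. Let $X_1,\dots,X_n$ be i.i.d. on $[m]$ with $\Pr(X_1=i)=p_i$, let $h(x,y)=\mathbb{1}(x=y)$, $U_n=\binom{n}{2}^{-1}\sum_{1\le i<j\le n}h(X_i,X_j)$, and $\hat h(i)=\frac{1}{n-1}\sum_{j\ne i}h(X_i,X_j)$ for $i\in[n]$. Let $\gamma\in(0,1)$, assume $n\ge 16/\gamma$, and set $\xi=\frac{6}{m}+\frac{8\log(4n/\gamma)}{n}$. Then with probability at least $1-\gamma$, $|\hat h(i)-U_n|\le\xi$ for all $i\in[n]$. *)

(* Defs.v *)
From HB Require Import structures.
From mathcomp Require Import all_boot all_order all_algebra.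
From mathcomp Require Import all_classical all_reals all_analysis.
Set Implicit Arguments. Unset Strict Implicit. Unset Printing Implicit Defensive.
Import Order.TTheory GRing.Theory Num.Theory.
Local Open Scope ring_scope.

Section Defs.
Context {R : realType} {m n : nat}.

Definition hker (x y : 'I_m) : R := (x == y)%:R.

Definition iid_mass (p : 'I_m -> R) (x : {ffun 'I_n -> 'I_m}) : R :=
  \prod_(i < n) p (x i).

Definition iid_prob (p : 'I_m -> R) (E : pred {ffun 'I_n -> 'I_m}) : R :=
  \sum_(x | E x) iid_mass p x.

Definition Ustat (x : {ffun 'I_n -> 'I_m}) : R :=
  ('C(n, 2))%:R^-1 * \sum_(i < n) \sum_(j < n | (i < j)%N) hker (x i) (x j).

Definition hhat (x : {ffun 'I_n -> 'I_m}) (i : 'I_n) : R :=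
  ((n - 1)%:R)^-1 * \sum_(j < n | j != i) hker (x i) (x j).

End Defs.

(* Main.v *)
Require Import Defs.
From HB Require Import structures.
From mathcomp Require Import all_boot all_order all_algebra.
From mathcomp Require Import all_classical all_reals all_analysis.
From mathcomp Require Import zify ring lra.
Import Order.TTheory GRing.Theory Num.Theory.
Local Open Scope ring_scope.

Lemma sym_sum (R : realType) n m (x : {ffun 'I_n -> 'I_m}) :
  \sum_(i < n) \sum_(j < n | j != i) hker (x i) (x j) =
  2 * \sum_(i < n) \sum_(j < n | (i < j)%N) hker (x i) (x j) :> R.
Proof.
have sp : forall i : 'I_n, \sum_(j < n | j != i) hker (x i) (x j) =
   \sum_(j < n | (i < j)%N) hker (x i) (x j) + \sum_(j < n | (j < i)%N) hker (x i) (x j) :> R.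
  move=> i; rewrite (bigID (fun j : 'I_n => (i < j)%N)) /=; congr (_ + _);
  apply: eq_bigl => j; rewrite -val_eqE /= neq_ltn; lia.
rewrite (eq_bigr _ (fun i _ => sp i)) big_split /=.
have -> : \sum_(i < n) \sum_(j < n | (j < i)%N) hker (x i) (x j) =
          \sum_(i < n) \sum_(j < n | (i < j)%N) hker (x i) (x j) :> R.
  transitivity (\sum_(i < n) \sum_(j < n) (if (j < i)%N then hker (x i) (x j) else 0 : R)).
    by apply: eq_bigr => i _; rewrite big_mkcond.
  rewrite exchange_big; apply: eq_bigr => j _; rewrite [RHS]big_mkcond; apply: eq_bigr => i _.
  by rewrite /hker eq_sym.
by rewrite mulr2n mulrDl mul1r.
Qed.
Lemma bin2E n : ('C(n, 2) * 2 = n * (n - 1))%N.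
Proof.
rewrite bin2 muln2 halfK -subn1.
case: n => [|n] //=. by rewrite oddM subn1 /= andNb subn0.
Qed.

Lemma hker_ge0 (R : realType) m (a b : 'I_m) : 0 <= hker a b :> R.
Proof. by rewrite /hker ler0n. Qed.

Lemma detA (R : realType) n m (x : {ffun 'I_n -> 'I_m}) (xi : R) :
  (2 <= n)%N -> 0 <= xi ->
  (forall i : 'I_n, \sum_(j < n | j != i) hker (x i) (x j) <= (n - 1)%:R * xi) ->
  forall i : 'I_n, `|hhat x i - Ustat x| <= xi.
Proof.
move=> n2 xi0 H i.
have n1 : 0 < (n - 1)%:R :> R by rewrite ltr0n; lia.
have hh0 : 0 <= hhat (R:=R) x i.
  rewrite /hhat; apply: mulr_ge0; first by rewrite invr_ge0 ler0n.
  by rewrite sumr_ge0 // => j _; apply: hker_ge0.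
have hh1 : hhat (R:=R) x i <= xi.
  by rewrite /hhat mulrC ler_pdivrMr // mulrC H.
set S := \sum_(i < n) \sum_(j < n | (i < j)%N) hker (x i) (x j) : R.
have S0 : 0 <= S by rewrite sumr_ge0 // => k _; rewrite sumr_ge0 // => j _; apply: hker_ge0.
have S2 : 2 * S <= n%:R * ((n - 1)%:R * xi).
  rewrite -sym_sum.
  apply: le_trans (ler_sum _ (fun k _ => H k)) _.
  by rewrite sumr_const card_ord [X in _ <= X]mulr_natl.
have C : ('C(n, 2))%:R * 2 = n%:R * (n - 1)%:R :> R by rewrite -!natrM bin2E.
have Cp : 0 < ('C(n, 2))%:R :> R.
  have : 0 < n%:R * (n - 1)%:R :> R by rewrite mulr_gt0 // ltr0n; lia.
  rewrite -C; nra.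
have U0 : 0 <= Ustat (R:=R) x by rewrite /Ustat; apply: mulr_ge0; rewrite // invr_ge0 ltW.
have U1 : Ustat (R:=R) x <= xi.
  rewrite /Ustat -/S mulrC ler_pdivrMr //.
  have : 2 * S <= ('C(n, 2))%:R * 2 * xi by rewrite C -mulrA.
  nra.
rewrite ler_distl; apply/andP; split; lra.
Qed.

Lemma moment (R : realType) n m (p : 'I_m -> R) (i : 'I_n) :
  \sum_(x : {ffun 'I_n -> 'I_m}) iid_mass p x *
     expR (\sum_(j < n | j != i) hker (x i) (x j))
  = \sum_(k < m) p k * (\sum_(l < m) p l * expR (hker k l)) ^+ (n - 1).
Proof.
pose G (k : 'I_m) (j : 'I_n) (l : 'I_m) : R :=
  if j == i then (l == k)%:R * p l else p l * expR (hker k l).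
have E1 : forall x : {ffun 'I_n -> 'I_m},
    iid_mass p x * expR (\sum_(j < n | j != i) hker (x i) (x j)) =
    \sum_(k < m) \prod_(j < n) G k j (x j).
  move=> x; rewrite [RHS](bigD1 (x i)) //= [X in _ = _ + X]big1 ?addr0; last first.
    move=> k kn; rewrite (bigD1 i) //= /G eqxx.
    by rewrite eq_sym (negbTE kn) !mul0r.
  rewrite [RHS](bigD1 i) //= {1}/G !eqxx mul1r /iid_mass (bigD1 i) //= expR_sum -mulrA.
  congr (_ * _); rewrite -big_split /=; apply: eq_bigr => j /negbTE jn; by rewrite /G jn.
rewrite (eq_bigr _ (fun x _ => E1 x)) exchange_big /=.
apply: eq_bigr => k _.
rewrite -(bigA_distr_bigA (fun j l => G k j l)) /= (bigD1 i) //=.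
congr (_ * _).
  rewrite /G eqxx (bigD1 k) //= eqxx mul1r big1 ?addr0 // => l lk.
  by rewrite (negbTE lk) mul0r.
rewrite (eq_bigr (fun _ => \sum_(l < m) p l * expR (hker k l))); last first.
  by move=> j /negbTE jn; rewrite /G jn.
rewrite prodr_const; congr (_ ^+ _).
by rewrite cardC1 card_ord subn1.
Qed.

Lemma e_le4 (R : realType) : expR 1 <= 4 :> R.
Proof.
have h := expR_ge1Dx (- (1 / 2) : R); rewrite expRN in h.
set t := expR (1 / 2 : R) in h.
have t0 : 0 < t := expR_gt0 _.
have tt : t * t^-1 = 1 by rewrite mulfV // gt_eqF.
have ti : 0 < t^-1 by rewrite invr_gt0.
have t2 : t <= 2 by nra.
have -> : expR 1 = t * t by rewrite -expRD; congr expR; lra.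
nra.
Qed.

Theorem lemmaA19 (R : realType) (m n : nat) (a : 'I_m -> R) (gamma : R) :
  (1 <= m)%N ->
  (forall i, -1 <= a i <= 1) ->
  \sum_(i < m) a i = 0 ->
  0 < gamma < 1 ->
  16 / gamma <= n%:R ->
  let p := fun i : 'I_m => (1 + a i) / m%:R in
  let xi := 6 / m%:R + 8 * ln (4 * n%:R / gamma) / n%:R in
  1 - gamma <=
    iid_prob p (fun x : {ffun 'I_n -> 'I_m} =>
                  [forall i : 'I_n, `|hhat x i - Ustat x| <= xi]).
Proof.
move=> m1 ha hsum /andP[g0 g1] hn.
pose p := fun i : 'I_m => (1 + a i) / m%:R.
pose xi := 6 / m%:R + 8 * ln (4 * n%:R / gamma) / n%:R.
change (1 - gamma <= iid_prob p (fun x : {ffun 'I_n -> 'I_m} =>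
                  [forall i : 'I_n, `|hhat x i - Ustat x| <= xi])).
have mR : 0 < m%:R :> R by rewrite ltr0n.
have mi0 : 0 < m%:R^-1 :> R by rewrite invr_gt0.
have p0 : forall k, 0 <= p k.
  move=> k; rewrite /p; apply: mulr_ge0; last exact: ltW.
  by have /andP[] := ha k; lra.
have p2 : forall k, p k <= 2 * m%:R^-1.
  move=> k; rewrite /p; apply: ler_wpM2r; first exact: ltW.
  by have /andP[] := ha k; lra.
have psum : \sum_k p k = 1.
  rewrite /p -mulr_suml big_split /= hsum addr0 sumr_const card_ord.
  by rewrite -mulr_natl mulr1 mulfV // gt_eqF.
have n16 : 16 < n%:R :> R.
  apply: lt_le_trans hn; rewrite ltr_pdivlMr //; lra.
have n2 : (2 <= n)%N by rewrite -(ler_nat R); lra.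
have nR : 0 < n%:R :> R by lra.
pose L := ln (4 * n%:R / gamma).
have L0 : 0 <= L.
  rewrite /L ln_ge0 // ler_pdivlMr //; lra.
have eL : expR (- L) = gamma / (4 * n%:R).
  rewrite expRN /L lnK ?invf_div // posrE divr_gt0 //; lra.
have xi0 : 0 <= xi.
  rewrite /xi addr_ge0 // ?divr_ge0 ?ler0n // mulr_ge0 //.
pose c := fun (x : {ffun 'I_n -> 'I_m}) (i : 'I_n) =>
  \sum_(j < n | j != i) hker (x i) (x j) : R.
pose b := (n - 1)%:R * xi.
have e4 := e_le4 R.
have e2 : 2 <= expR 1 :> R by have := expR_ge1Dx (1 : R); lra.
have Mi : forall i, \sum_x iid_mass p x * expR (c x i) <= expR ((n - 1)%:R * (6 / m%:R)).
  move=> i; rewrite /c moment.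
  have sk : forall k, \sum_l p l * expR (hker k l) = 1 + p k * (expR 1 - 1).
    move=> k; rewrite (bigD1 k) //= /hker eqxx.
    rewrite (eq_bigr (fun l => p l)); last first.
      by move=> l /negbTE lk; rewrite eq_sym lk expR0 mulr1.
    have -> : \sum_(l < m | l != k) p l = 1 - p k.
      by rewrite -psum [in RHS](bigD1 k) //= addrC addrK.
    rewrite mulr1n; ring.
  apply: le_trans (_ : \sum_(k < m) p k * expR (6 / m%:R) ^+ (n - 1) <= _).
    apply: ler_sum => k _; rewrite sk; apply: ler_wpM2l => //.
    apply: lerXn2r; rewrite ?nnegrE; first by have := p0 k; nra.
      exact: expR_ge0.
    apply: le_trans (expR_ge1Dx _); have := p2 k; have := p0 k; nra.
  by rewrite -mulr_suml psum mul1r -expRM_natl.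
pose P := fun x : {ffun 'I_n -> 'I_m} => [forall i : 'I_n, `|hhat x i - Ustat x| <= xi].
have bad : forall x, ~~ P x -> 1 <= \sum_(i < n) expR (c x i - b).
  move=> x ngx.
  have [i ci] : exists i, b < c x i.
    apply/existsP; apply: contraNT ngx => /existsPn H; apply/forallP => i.
    apply: detA => // j; have := H j; rewrite -leNgt //.
  apply: le_trans (_ : expR (c x i - b) <= _).
    apply: le_trans (expR_ge1Dx _); lra.
  rewrite (bigD1 i) //= lerDl sumr_ge0 // => j _; exact: expR_ge0.
have mass0 : forall x : {ffun 'I_n -> 'I_m}, 0 <= iid_mass p x.
  by move=> x; rewrite /iid_mass; apply: prodr_ge0 => j _.
have Pbad : \sum_(x | ~~ P x) iid_mass p x <= gamma / 4.
  apply: le_trans (_ : \sum_(x | ~~ P x) iid_mass p x * \sum_(i < n) expR (c x i - b) <= _).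
    apply: ler_sum => x nx; rewrite -{1}(mulr1 (iid_mass p x)) ler_wpM2l //.
    exact: bad.
  apply: le_trans (_ : \sum_x iid_mass p x * \sum_(i < n) expR (c x i - b) <= _).
    rewrite [X in _ <= X](bigID (fun x => ~~ P x)) /= lerDl sumr_ge0 // => x _.
    by rewrite mulr_ge0 // sumr_ge0 // => i _; exact: expR_ge0.
  have -> : \sum_x iid_mass p x * \sum_(i < n) expR (c x i - b) =
      \sum_(i < n) expR (- b) * \sum_x iid_mass p x * expR (c x i).
    rewrite (eq_bigr (fun x => \sum_(i < n) iid_mass p x * expR (c x i - b))); last first.
      by move=> x _; rewrite mulr_sumr.
    rewrite exchange_big; apply: eq_bigr => i _; rewrite mulr_sumr; apply: eq_bigr => x _.
    by rewrite expRD; ring.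
  apply: le_trans (_ : \sum_(i < n) expR (- b) * expR ((n - 1)%:R * (6 / m%:R)) <= _).
    by apply: ler_sum => i _; rewrite ler_wpM2l // expR_ge0.
  rewrite sumr_const card_ord -expRD -[X in X <= _]mulr_natl.
  have ex : - b + (n - 1)%:R * (6 / m%:R) <= - L.
    have -> : - b + (n - 1)%:R * (6 / m%:R) = - ((n%:R - 1) * (8 * L * n%:R^-1)).
      by rewrite /b /xi /L natrB ?(ltnW n2) //; ring.
    have ni : n%:R * n%:R^-1 = 1 :> R by rewrite mulfV // gt_eqF.
    have ni0 : 0 < n%:R^-1 :> R by rewrite invr_gt0.
    have ni16 : 16 * n%:R^-1 <= 1 :> R by nra.
    have h1 : 0 <= L * (1 - 16 * n%:R^-1) by apply: mulr_ge0 => //; lra.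
    have h2 : L * (n%:R * n%:R^-1) = L by rewrite ni mulr1.
    nra.
  apply: le_trans (_ : n%:R * expR (- L) <= _).
    by rewrite ler_wpM2l ?ler0n // ler_expR.
  rewrite eL; have -> : n%:R * (gamma / (4 * n%:R)) = gamma / 4 by field; rewrite gt_eqF.
  done.
have tot : \sum_(x : {ffun 'I_n -> 'I_m}) iid_mass p x = 1.
  transitivity (\prod_(i < n) \sum_(l < m) p l); first by symmetry; exact: (bigA_distr_bigA (fun (_ : 'I_n) (l : 'I_m) => p l)).
  by rewrite (eq_bigr (fun _ => 1)) => [|j _]; [exact: big1_eq | exact: psum].
rewrite /iid_prob; change (1 - gamma <= \sum_(x | P x) iid_mass p x).
rewrite (bigID P) /= in tot.
lra.
Qed.
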